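(* Let $\mathcal{H}_O\simeq\mathbb{C}^{d_O}$ and $\mathcal{H}_R\simeq\mathbb{C}^{d_R}$. Let $H_R=\sum_{m=1}^{d_R}\lambda_m^{\uparrow}|\xi_m\rangle\langle\xi_m|$ with $\lambda_1^\uparrow\leqslant\dots\leqslant\lambda_{d_R}^\uparrow$ and $\{|\xi_m\rangle\}$ an orthonormal basis of $\mathcal{H}_R$; let $\beta\in(0,\infty)$ and $\rho_R(\beta)=e^{-\beta H_R}/\mathrm{tr}[e^{-\beta H_R}]=\sum_m r_m^{\downarrow}|\xi_m\rangle\langle\xi_m|$. Let $\rho_O=\sum_{l=1}^{d_O}o_l^{\downarrow}|\varphi_l\rangle\langle\varphi_l|$ be a density operator on $\mathcal{H}_O$ with $o_1^\downarrow\geqslant\dots\geqslant o_{d_O}^\downarrow$ and $\{|\varphi_l\rangle\}$ an orthonormal basis. Write $\rho=\rho_O\otimes\rho_R(\beta)=\sum_{n=1}^{d_Od_R}p_n^{\downarrow}|\psi_n\rangle\langle\psi_n|$, where $(p_n^\downarrow)_n$ is the non-increasing rearrangement of $(o_l^\downarrow r_m^\downarrow)_{l,m}$ and $(|\psi_n\rangle)_n$ the correspondingly rearranged family $(|\varphi_l\rangle\otimes|\xi_m\rangle)_{l,m}$. For a unitary $U$ on $\mathcal{H}_O\otimes\mathcal{H}_R$ define the heat $\Delta Q(U)=\mathrm{tr}[H_R(\mathrm{tr}_O[U\rho U^\dagger]-\rho_R(\beta))]$. Suppose $U_{\mathrm{maj}}^f$ is a unitary such that, for every $m\in\{1,\dots,d_R\}$,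 there is an orthonormal basis $\{|\varphi_l^m\rangle\}_{l=1}^{d_O}$ of $\mathcal{H}_O$ with $$U_{\mathrm{maj}}^f|\psi_{(m-1)d_O+l}\rangle=|\varphi_l^m\rangle\otimes|\xi_m\rangle\quad\text{for all } l\in\{1,\dots,d_O\}.$$ Then $\Delta Q(U_{\mathrm{maj}}^f)\leqslant\Delta Q(U)$ for every unitary $U$ on $\mathcal{H}_O\otimes\mathcal{H}_R$.
   Context: $\mathrm{tr}_O$ denotes the partial trace over $\mathcal{H}_O$. *)

(* Defs.v *)
From HB Require Import structures.
From mathcomp Require Import all_boot all_order all_algebra.
From mathcomp Require Import reals sequences exp.
From mathcomp Require Export complex mxtens.
Set Implicit Arguments.
Unset Strict Implicit.
Unset Printing Implicit Defensive.
Import Order.TTheory GRing.Theory Num.Theory.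
Local Open Scope ring_scope.
Local Open Scope complex_scope.

Section QDefs.
Variable R : realType.
Local Notation C := R[i].

Definition RtoC (x : R) : C := x%:C.

Definition adjmx {m n} (A : 'M[C]_(m, n)) : 'M[C]_(n, m) :=
  (map_mx Num.conj A)^T.

Definition ketbra {d} (u v : 'cV[C]_d) : 'M[C]_d := u *m adjmx v.

Definition onb {d} (v : 'I_d -> 'cV[C]_d) : Prop :=
  forall i j, adjmx (v i) *m v j = (i == j)%:R%:M.

Definition qunitary {d} (U : 'M[C]_d) : Prop :=
  U *m adjmx U = 1%:M /\ adjmx U *m U = 1%:M.

(* tensor product of vectors |u> (x) |v> ; index (l, m) |-> l * dR + m *)
Definition tensv {dO dR} (u : 'cV[C]_dO) (v : 'cV[C]_dR) : 'cV[C]_(dO * dR) :=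
  castmx (erefl, muln1 1) (u *t v).

Definition ptrO {dO dR} (X : 'M[C]_(dO * dR)) : 'M[C]_dR :=
  \matrix_(j, k) \sum_(i < dO) X (mxtens_index (i, j)) (mxtens_index (i, k)).

Definition specop {d} (w : 'I_d -> R) (v : 'I_d -> 'cV[C]_d) : 'M[C]_d :=
  \sum_(k < d) RtoC (w k) *: ketbra (v k) (v k).

Definition gibbsw {dR} (beta : R) (lam : 'I_dR -> R) (m : 'I_dR) : R :=
  expR (- beta * lam m) / \sum_(k < dR) expR (- beta * lam k).

Definition qheat {dO dR} (HR rhoR : 'M[C]_dR) (rho U : 'M[C]_(dO * dR)) : C :=
  \tr (HR *m (ptrO (U *m rho *m adjmx U) - rhoR)).

(* block index: 0-based version of (m-1) d_O + l, i.e. m * dO + l *)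
Definition blk {dO dR} (m : 'I_dR) (l : 'I_dO) : 'I_(dO * dR) :=
  cast_ord (mulnC dR dO) (mxtens_index (m, l)).

End QDefs.

(* Main.v *)
Require Import Defs.
From HB Require Import structures.
From mathcomp Require Import all_boot all_order all_algebra.
From mathcomp Require Import reals sequences exp.
From mathcomp Require Import complex mxtens.
From mathcomp Require Import ring.
Import Order.TTheory GRing.Theory Num.Theory.
Local Open Scope ring_scope.
Section Comb.
Variable T : numDomainType.

Lemma key_lemma N (b : 'I_N -> T) (D : 'I_N -> 'I_N -> T) (j : 'I_N) :
  (forall n k, 0 <= D n k) -> (forall n, \sum_k D n k = 1) ->
  (forall k, \sum_n D n k = 1) ->
  {homo b : x y / (x <= y)%N >-> x <= y} ->
  0 <= \sum_(n : 'I_N | (n <= j)%N) \sum_k b k * D n k - \sum_(n : 'I_N | (n <= j)%N) b n.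
Proof.
move=> D0 Dr Dc bh.
pose x k := \sum_(n : 'I_N | (n <= j)%N) D n k.
have -> : \sum_(n : 'I_N | (n <= j)%N) \sum_k b k * D n k = \sum_k b k * x k.
  rewrite exchange_big /=; apply: eq_bigr => k _; by rewrite mulr_sumr.
have -> : \sum_(n : 'I_N | (n <= j)%N) b n = \sum_k b k * ((k <= j)%N)%:R.
  by rewrite big_mkcond /=; apply: eq_bigr => k _; case: ifP; rewrite ?mulr1 ?mulr0.
have hsum : \sum_k (x k - ((k <= j)%N)%:R) = 0.
  rewrite sumrB /x exchange_big /=.
  rewrite (eq_bigr (fun _ => 1)) => [|n _]; last exact: Dr.
  rewrite [X in X - _]big_mkcond /=.
  apply/eqP; rewrite subr_eq0; apply/eqP; apply: eq_bigr => k _. by case: ifP.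
rewrite -sumrB.
have -> : \sum_k (b k * x k - b k * ((k <= j)%N)%:R) =
   \sum_k (b k - b j) * (x k - ((k <= j)%N)%:R) + b j * \sum_k (x k - ((k <= j)%N)%:R).
  rewrite mulr_sumr -big_split /=; apply: eq_bigr => k _; ring.
rewrite hsum mulr0 addr0; apply: sumr_ge0 => k _.
have x0 : 0 <= x k by apply: sumr_ge0.
case: (leqP k j) => hk.
  apply: mulr_le0; first by rewrite subr_le0; apply: bh.
  rewrite subr_le0 -(Dc k) [leRHS](bigID (fun n : 'I_N => (n <= j)%N)) /= lerDl.
  by apply: sumr_ge0.
rewrite subr0; apply: mulr_ge0 => //; rewrite subr_ge0; apply: bh; exact: ltnW.
Qed.

Lemma maj_ineq N (p b : 'I_N -> T) (D : 'I_N -> 'I_N -> T) :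
  (forall n k, 0 <= D n k) -> (forall n, \sum_k D n k = 1) ->
  (forall k, \sum_n D n k = 1) ->
  {homo p : x y / (x <= y)%N >-> y <= x} -> (forall n, 0 <= p n) ->
  {homo b : x y / (x <= y)%N >-> x <= y} ->
  \sum_n p n * b n <= \sum_n p n * \sum_k b k * D n k.
Proof.
case: N p b D => [|N] p b D D0 Dr Dc ph p0 bh; first by rewrite !big_ord0.
pose P (j : nat) := if (j < N.+1)%N then p (inord j) else 0.
pose c (j : 'I_N.+1) := P j - P j.+1.
have PE : forall n : 'I_N.+1, P n = p n.
  by move=> n; rewrite /P ltn_ord inord_val.
have pE : forall n : 'I_N.+1, p n = \sum_(j : 'I_N.+1 | (n <= j)%N) c j.
  move=> n.
  rewrite (eq_bigl (fun j : 'I_N.+1 => xpredT (nat_of_ord j) && (n <= j)%N)) //.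
  rewrite -(big_geq_mkord n N.+1 xpredT (fun j => P j - P j.+1)).
  have HH := telescope_sumr P (ltnW (ltn_ord n)).
  rewrite (eq_bigr (fun k => - (P k.+1 - P k))); last by move=> k _; rewrite opprB.
  rewrite sumrN HH opprB.
  by rewrite /P ltnn subr0 ltn_ord inord_val.
have c0 : forall j, 0 <= c j.
  move=> j; rewrite /c PE /P; case: ifP => hj; last by rewrite subr0.
  rewrite subr_ge0; apply: ph; by rewrite inordK.
rewrite -subr_ge0 -sumrB.
have -> : \sum_n (p n * \sum_k b k * D n k - p n * b n) =
   \sum_j c j * (\sum_(n : 'I_N.+1 | (n <= j)%N) \sum_k b k * D n k - \sum_(n : 'I_N.+1 | (n <= j)%N) b n).
  under eq_bigr => n _ do rewrite -mulrBr pE mulr_suml big_mkcond /=.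
  rewrite exchange_big /=; apply: eq_bigr => j _.
  rewrite -sumrB mulr_sumr [RHS]big_mkcond /=; apply: eq_bigr => n _.
  by case: ifP; rewrite ?mulr0.
apply: sumr_ge0 => j _; apply: mulr_ge0 => //; exact: key_lemma.
Qed.
End Comb.

Section LA.
Variable R : realType.
Local Notation C := R[i].

Definition ip {d} (u v : 'cV[C]_d) : C := (adjmx u *m v) 0 0.

Lemma adjmxE {m n} (A : 'M[C]_(m,n)) i j : adjmx A i j = (A j i)^*.
Proof. by rewrite /adjmx !mxE. Qed.

Lemma ipE {d} (u v : 'cV[C]_d) : ip u v = \sum_i (u i 0)^* * v i 0.
Proof. by rewrite /ip mxE; apply: eq_bigr => i _; rewrite adjmxE. Qed.

Lemma ketbraE {d} (u v : 'cV[C]_d) i j : ketbra u v i j = u i 0 * (v j 0)^*.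
Proof. by rewrite /ketbra mxE big_ord1 adjmxE. Qed.

Lemma tensvE {dO dR} (u : 'cV[C]_dO) (v : 'cV[C]_dR) i j :
  tensv u v (mxtens_index (i, j)) 0 = u i 0 * v j 0.
Proof.
rewrite /tensv castmxE /= cast_ord_id.
rewrite mxE mxtens_indexK /=; congr (u _ _ * v _ _); apply: ord1.
Qed.

Lemma sum_tens m n (F : 'I_(m * n) -> C) :
  \sum_(a < m * n) F a = \sum_(i < m) \sum_(j < n) F (mxtens_index (i, j)).
Proof.
rewrite pair_big /= (reindex (@mxtens_index m n)) /=.
  by apply: eq_bigr => -[i j] _.
by exists (@mxtens_unindex m n) => x _; rewrite (mxtens_indexK, mxtens_unindexK).
Qed.

Lemma ip_tens {dO dR} (a c : 'cV[C]_dO) (b d : 'cV[C]_dR) :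
  ip (tensv a b) (tensv c d) = ip a c * ip b d.
Proof.
rewrite !ipE sum_tens mulr_suml; apply: eq_bigr => i _.
rewrite mulr_sumr; apply: eq_bigr => j _.
rewrite !tensvE rmorphM /=; ring.
Qed.

Lemma ketbra_tens {dO dR} (a c : 'cV[C]_dO) (b d : 'cV[C]_dR) :
  ketbra (tensv a b) (tensv c d) = ketbra a c *t ketbra b d.
Proof.
apply/matrixP => x y.
case: (mxtens_indexP x) => i j; case: (mxtens_indexP y) => k l.
rewrite tensmxE !ketbraE !tensvE rmorphM /=; ring.
Qed.

Lemma tens_sum {m n p q} (I J : finType) (A : I -> 'M[C]_(m,n)) (B : J -> 'M[C]_(p,q)) :
  (\sum_i A i) *t (\sum_j B j) = \sum_i \sum_j (A i *t B j).
Proof.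
apply/matrixP => x y; rewrite mxE !summxE mulr_suml; apply: eq_bigr => i _.
rewrite summxE mulr_sumr; apply: eq_bigr => j _; by rewrite !mxE.
Qed.

Lemma tensZ {m n p q} (a b : C) (A : 'M[C]_(m,n)) (B : 'M[C]_(p,q)) :
  (a *: A) *t (b *: B) = (a * b) *: (A *t B).
Proof. apply/matrixP => x y; rewrite !mxE; ring. Qed.

Lemma onb_ip {d} (v : 'I_d -> 'cV[C]_d) : onb v -> forall i j, ip (v i) (v j) = (i == j)%:R.
Proof. by move=> h i j; rewrite /ip h mxE eqxx mulr1n. Qed.

Lemma onb_complete {d} (v : 'I_d -> 'cV[C]_d) : onb v -> \sum_k ketbra (v k) (v k) = 1%:M.
Proof.
move=> h; pose M := \matrix_(i, k) v k i 0.
have h1 : adjmx M *m M = 1%:M.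
  apply/matrixP => i j; rewrite [RHS]mxE -(@onb_ip _ v h i j) ipE mxE; apply: eq_bigr => x _.
  by rewrite adjmxE !mxE.
have := mulmx1C h1 => /matrixP h2; apply/matrixP => x y; rewrite -h2 summxE mxE.
by apply: eq_bigr => k _; rewrite ketbraE adjmxE !mxE.
Qed.


Lemma adjmx_mul {m n p} (A : 'M[C]_(m,n)) (B : 'M[C]_(n,p)) :
  adjmx (A *m B) = adjmx B *m adjmx A.
Proof. by rewrite /adjmx map_mxM trmx_mul. Qed.

Lemma adjmxK {m n} (A : 'M[C]_(m,n)) : adjmx (adjmx A) = A.
Proof. by apply/matrixP => i j; rewrite !adjmxE conjCK. Qed.

Lemma ip_sum {d} (I : finType) (u : 'cV[C]_d) (w : I -> 'cV[C]_d) :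
  ip u (\sum_i w i) = \sum_i ip u (w i).
Proof. by rewrite /ip mulmx_sumr summxE. Qed.

Lemma ip_scale {d} (u w : 'cV[C]_d) c : ip u (c *: w) = c * ip u w.
Proof. by rewrite /ip -scalemxAr mxE. Qed.

Lemma ip_conj {d} (u v : 'cV[C]_d) : ip u v = (ip v u)^*.
Proof.
rewrite !ipE rmorph_sum; apply: eq_bigr => i _; by rewrite rmorphM /= conjCK mulrC.
Qed.

Lemma ip_mulmx {d} (u v : 'cV[C]_d) (A : 'M[C]_d) : ip u (A *m v) = ip (adjmx A *m u) v.
Proof. by rewrite /ip adjmx_mul adjmxK mulmxA. Qed.

Lemma mx11_mul (A B : 'M[C]_1) : (A *m B) 0 0 = A 0 0 * B 0 0.
Proof. by rewrite mxE big_ord1. Qed.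

Lemma ip_ketbra {d} (u v w : 'cV[C]_d) : ip u (ketbra v v *m w) = ip u v * ip v w.
Proof. by rewrite /ip /ketbra -mulmxA mulmxA mx11_mul. Qed.

Lemma tr_ketbra {d} (u : 'cV[C]_d) (Y : 'M[C]_d) : \tr (ketbra u u *m Y) = ip u (Y *m u).
Proof. by rewrite /ketbra -mulmxA mxtrace_mulC trace_mx11 /ip mulmxA. Qed.

Lemma parseval {d} (I : finType) (e : I -> 'cV[C]_d) (w : 'cV[C]_d) :
  \sum_k ketbra (e k) (e k) = 1%:M -> \sum_k ip w (e k) * ip (e k) w = ip w w.
Proof.
move=> h; have -> : ip w w = ip w (1%:M *m w) by rewrite mul1mx.
rewrite -h mulmx_suml ip_sum.
by apply: eq_bigr => k _; rewrite ip_ketbra.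
Qed.

Lemma ip_conj_sandwich {d} (u w : 'cV[C]_d) (U : 'M[C]_d) :
  ip u (U *m ketbra w w *m adjmx U *m u) = ip u (U *m w) * (ip u (U *m w))^*.
Proof.
have -> : U *m ketbra w w *m adjmx U *m u = U *m (ketbra w w *m (adjmx U *m u)) by rewrite !mulmxA.
by rewrite ip_mulmx ip_ketbra [ip w _]ip_conj -ip_mulmx.
Qed.

Lemma tr_sum {d} (I : finType) (F : I -> 'M[C]_d) : \tr (\sum_i F i) = \sum_i \tr (F i).
Proof. exact: raddf_sum. Qed.


Lemma ptrO_tr {dO dR} (H : 'M[C]_dR) (Y : 'M[C]_(dO*dR)) :
  \tr (H *m ptrO Y) = \tr ((1%:M *t H) *m Y).
Proof.
rewrite /mxtrace [RHS]sum_tens exchange_big /=; apply: eq_bigr => j _.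
rewrite mxE (eq_bigr (fun k => \sum_i H j k * Y (mxtens_index (i,k)) (mxtens_index (i,j)))); last first.
  by move=> k _; rewrite mxE mulr_sumr.
rewrite exchange_big /=; apply: eq_bigr => i _.
rewrite mxE sum_tens (bigD1 i) //= [X in _ + X]big1 ?addr0.
  by apply: eq_bigr => k _; rewrite tensmxE mxE eqxx mulr1n mul1r.
move=> i' /negbTE hi; apply: big1 => k _; by rewrite tensmxE mxE eq_sym hi mulr0n !mul0r.
Qed.

Lemma tens11 {m n} : (1%:M : 'M[C]_m) *t (1%:M : 'M[C]_n) = 1%:M.
Proof.
apply/matrixP => x y; case: (mxtens_indexP x) => i j; case: (mxtens_indexP y) => k l.
rewrite tensmxE !mxE (inj_eq (can_inj (@mxtens_indexK m n))) xpair_eqE.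
by case: (i == k); case: (j == l); rewrite ?mulr1n ?mulr0n ?mul1r ?mul0r.
Qed.

Lemma specop_tens {dO dR} (w1 : 'I_dO -> R) (v1 : 'I_dO -> 'cV[C]_dO)
  (w2 : 'I_dR -> R) (v2 : 'I_dR -> 'cV[C]_dR) :
  specop w1 v1 *t specop w2 v2 = \sum_(q : 'I_dO * 'I_dR) RtoC (w1 q.1 * w2 q.2) *:
     ketbra (tensv (v1 q.1) (v2 q.2)) (tensv (v1 q.1) (v2 q.2)).
Proof.
rewrite /specop tens_sum pair_big /=; apply: eq_bigr => -[i j] _ /=.
by rewrite tensZ ketbra_tens /RtoC rmorphM.
Qed.

Lemma specop1 {d} (v : 'I_d -> 'cV[C]_d) : onb v -> specop (fun _ => 1) v = 1%:M.
Proof.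
move=> h; rewrite -(onb_complete v h) /specop; apply: eq_bigr => k _.
by rewrite /RtoC rmorph1 scale1r.
Qed.

End LA.
Arguments ip {R d} u v.
Theorem lemma3 (R : realType) (dO dR : nat)
  (lam : 'I_dR -> R) (xi : 'I_dR -> 'cV[R[i]]_dR)
  (beta : R) (o : 'I_dO -> R) (phi : 'I_dO -> 'cV[R[i]]_dO)
  (sigma : 'I_(dO * dR) -> 'I_dO * 'I_dR)
  (Umaj : 'M[R[i]]_(dO * dR)) :
  (* H_R = sum_m lam_m |xi_m><xi_m|, eigenvalues non-decreasing, ONB *)
  {homo lam : m1 m2 / (m1 <= m2)%N >-> m1 <= m2} ->
  onb xi ->
  0 < beta ->
  (* rho_O = sum_l o_l |phi_l><phi_l| density operator, o non-increasing *)
  (forall l, 0 <= o l) -> \sum_(l < dO) o l = 1 ->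
  {homo o : l1 l2 / (l1 <= l2)%N >-> l2 <= l1} ->
  onb phi ->
  (* (p_n, psi_n) is a non-increasing rearrangement of (o_l r_m, phi_l (x) xi_m) *)
  bijective sigma ->
  {homo (fun n => o (sigma n).1 * gibbsw beta lam (sigma n).2) :
     n1 n2 / (n1 <= n2)%N >-> n2 <= n1} ->
  let HR := specop lam xi in
  let rhoR := specop (gibbsw beta lam) xi in
  let rhoO := specop o phi in
  let rho := rhoO *t rhoR in
  let psi := fun n => tensv (phi (sigma n).1) (xi (sigma n).2) in
  qunitary Umaj ->
  (forall m : 'I_dR, exists phim : 'I_dO -> 'cV[R[i]]_dO,
      onb phim /\
      forall l : 'I_dO, Umaj *m psi (blk m l) = tensv (phim l) (xi m)) ->
  forall U : 'M[R[i]]_(dO * dR), qunitary U ->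
    qheat HR rhoR rho Umaj <= qheat HR rhoR rho U.
Proof.
move=> lamh xih bpos o0 osum oh phih sigb ph HR rhoR rhoO rho psi Umajh Uspec U Uh.
pose tau (k : 'I_(dO * dR)) : 'I_dO * 'I_dR :=
  let mk := @mxtens_unindex dR dO (cast_ord (esym (mulnC dR dO)) k) in (mk.2, mk.1).
have tauK : forall m l, tau (blk m l) = (l, m).
  by move=> m l; rewrite /tau /blk cast_ordK mxtens_indexK.
have blkK : forall k, blk (tau k).2 (tau k).1 = k.
  move=> k; rewrite /blk /tau; case E : (mxtens_unindex _) => [m l] /=.
  by rewrite -E mxtens_unindexK cast_ordKV.
have tau_bij : bijective tau.
  by exists (fun q => blk q.2 q.1) => [k|[l m]]; rewrite ?blkK ?tauK.
pose f (q : 'I_dO * 'I_dR) := tensv (phi q.1) (xi q.2).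
pose g k := f (tau k).
pose b k := RtoC (lam (tau k).2).
pose p n := RtoC (o (sigma n).1 * gibbsw beta lam (sigma n).2).
have F1 : \sum_q ketbra (f q) (f q) = 1%:M.
  rewrite -tens11 -(@specop1 _ _ phi phih) -(@specop1 _ _ xi xih) specop_tens; apply: eq_bigr => q _.
  by rewrite mulr1 /RtoC rmorph1 scale1r.
have F2 : \sum_k ketbra (g k) (g k) = 1%:M.
  by rewrite -F1 (reindex tau) //=; exact: onW_bij.
have F3 : \sum_n ketbra (psi n) (psi n) = 1%:M.
  by rewrite -F1 (reindex sigma) //=; exact: onW_bij.
have F4 : 1%:M *t HR = \sum_k b k *: ketbra (g k) (g k).
  rewrite -(@specop1 _ _ phi phih) specop_tens (reindex tau) /=; last exact: onW_bij.
  by apply: eq_bigr => k _; rewrite mul1r.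
have F5 : rho = \sum_n p n *: ketbra (psi n) (psi n).
  by rewrite /rho specop_tens (reindex sigma) /=; last exact: onW_bij.
have gN : forall k, ip (g k) (g k) = 1.
  by move=> k; rewrite ip_tens (@onb_ip _ _ _ phih) (@onb_ip _ _ _ xih) !eqxx mulr1.
have psiN : forall n, ip (psi n) (psi n) = 1.
  by move=> n; rewrite ip_tens (@onb_ip _ _ _ phih) (@onb_ip _ _ _ xih) !eqxx mulr1.
pose D V n k := ip (g k) (V *m psi n) * (ip (g k) (V *m psi n))^*.
have VE : forall V, \tr (HR *m ptrO (V *m rho *m adjmx V)) =
    \sum_n p n * \sum_k b k * D V n k.
  move=> V; rewrite ptrO_tr F4 mulmx_suml tr_sum.
  under eq_bigr => k _ do rewrite -scalemxAl mxtraceZ tr_ketbra F5 mulmx_sumr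
     !mulmx_suml ip_sum mulr_sumr.
  rewrite exchange_big /=; apply: eq_bigr => n _; rewrite mulr_sumr.
  apply: eq_bigr => k _.
  have E : V *m (p n *: ketbra (psi n) (psi n)) = p n *: (V *m ketbra (psi n) (psi n)).
    exact: (esym (scalemxAr (p n) V (ketbra (psi n) (psi n)))).
  rewrite E.
  by rewrite -!scalemxAl ip_scale ip_conj_sandwich /D; ring.
have Dge0 : forall V n k, 0 <= D V n k by move=> V n k; exact: mul_conjC_ge0.
have Drow : forall V, qunitary V -> forall n, \sum_k D V n k = 1.
  move=> V [_ hV] n.
  under eq_bigr => k _ do rewrite /D -ip_conj mulrC.
  rewrite (@parseval _ _ _ g _ F2) ip_mulmx mulmxA hV mul1mx; exact: psiN.
have Dcol : forall V, qunitary V -> forall k, \sum_n D V n k = 1.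
  move=> V [hV _] k.
  under eq_bigr => n _ do rewrite /D ip_mulmx -ip_conj.
  rewrite (@parseval _ _ _ psi _ F3) -ip_mulmx mulmxA hV mul1mx; exact: gN.
have Dmaj : forall n, \sum_k b k * D Umaj n k = b n.
  move=> n; set q := tau n.
  have nE : n = blk q.2 q.1 by rewrite /q blkK.
  have [phim [phimh hU]] := Uspec q.2.
  have hUn : Umaj *m psi n = tensv (phim q.1) (xi q.2) by rewrite -hU -nE.
  rewrite (eq_bigr (fun k => b n * D Umaj n k)).
    by rewrite -mulr_sumr Drow // mulr1.
  move=> k _; rewrite /D hUn ip_tens (@onb_ip _ _ _ xih).
  case: eqP => [e|_]; last by rewrite /= !mulr0 rmorph0 !mulr0.
  by rewrite /b e.
have bh : {homo b : x y / (x <= y)%N >-> x <= y}.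
  move=> x y hxy; rewrite /b /RtoC lecR; apply: lamh => /=; exact: leq_div2r.
have phh : {homo p : x y / (x <= y)%N >-> y <= x}.
  move=> x y hxy; rewrite /p /RtoC lecR; exact: ph.
have p0 : forall n, 0 <= p n.
  move=> n; rewrite /p /RtoC ler0c /gibbsw; apply: mulr_ge0 => //.
  apply: divr_ge0; [exact: expR_ge0 | apply: sumr_ge0 => m _; exact: expR_ge0].
rewrite /qheat !mulmxBr !raddfB /= lerD2r !VE.
rewrite (eq_bigr (fun n => p n * b n)); last by move=> n _; rewrite Dmaj.
apply: maj_ineq => //.
- exact: Drow.
- exact: Dcol.
Qed.
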